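(* Let $g_1:\mathcal W\to[\epsilon_1,1]$ (for some $\epsilon_1>0$) and $m_1:\mathcal W\to[0,1]$ be measurable functions such that either $g_1=g$ or $m_1=m$ ($P$-almost surely). Define \[ r_1(w)=E_P\big\{Y-m_1(W)\mid A=1,\ g_1(W)=g_1(w)\big\},\qquad e_1(w)=E_P\big\{g_1(W)\mid r_1(W)=r_1(w)\big\}\] (the $e$-score), and let $\lambda_1=(e_1,m_1)$. Then $P D_{\lambda_1,\theta}=E_P\{D_{\lambda_1,\theta}(O)\}=0$.
   Context: Let $O=(W,A,Y)$ be a random vector with distribution $P$, where $W$ takes values in a measurable space $\mathcal W$, $A\in\{0,1\}$, and $Y\in[0,1]$. Let $g(w)=P(A=1\mid W=w)$ (propensity score), $m(w)=E_P(Y\mid A=1,W=w)$ (outcome regression), and $\theta=E_P\{m(W)\}$. Strong positivity is assumed: there is $\epsilon>0$ with $P\{g(W)>\epsilon\}=1$. For a measurable $e:\mathcal W\to(0,1]$ bounded away from $0$ and a measurable $m':\mathcal W\to\mathbb R$, write $\lambda=(e,m')$ and \[ D_{\lambda,\theta}(O)=\frac{A}{e(W)}\{Y-m'(W)\}+m'(W)-\theta .\] For a function $f$ of $O$, $Pf=\int f\,dP$. *)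

(* Defs.v *)
From HB Require Import structures.
From mathcomp Require Import all_boot all_order all_algebra.
From mathcomp Require Import all_classical all_reals all_analysis.
Set Implicit Arguments. Unset Strict Implicit. Unset Printing Implicit Defensive.
Import Order.TTheory GRing.Theory Num.Theory.
Local Open Scope classical_set_scope.
Local Open Scope ring_scope.

(* [cond_exp_version P E X Z h]: h is a version of the conditional expectation
   v |-> E_P[ X | E, Z = v ], i.e. h is measurable, h o Z is integrable, and
   for every measurable set B of values of Z,
      E_P[ X 1_E 1_{Z in B} ] = E_P[ h(Z) 1_E 1_{Z in B} ].
   With E = setT this is the usual E_P[X | Z = v]. *)
Definition cond_exp_version {d} {T : measurableType d} {R : realType}
  (P : probability T R) {dV} {V : measurableType dV}
  (E : set T) (X : T -> R) (Z : T -> V) (h : V -> R) : Prop :=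
  measurable_fun setT h /\
  P.-integrable setT (fun x => (h (Z x))%:E) /\
  forall B : set V, measurable B ->
    (\int[P]_(x in E `&` Z @^-1` B) (X x)%:E =
     \int[P]_(x in E `&` Z @^-1` B) (h (Z x))%:E)%E.

Definition D_lambda {dW} {Wsp : measurableType dW} {R : realType}
  (e m' : Wsp -> R) (theta : R) (o : Wsp * R * R) : R :=
  let '(w, a, y) := o in a / e w * (y - m' w) + m' w - theta.

(* Main.v *)
Require Import Defs.
From HB Require Import structures.
From mathcomp Require Import all_boot all_order all_algebra.
From mathcomp Require Import all_classical all_reals all_analysis.
From mathcomp Require Import measurable_realfun.
From mathcomp Require Import lra ring.
Import Order.TTheory GRing.Theory Num.Theory.
Import HBNNSimple.
Local Open Scope classical_set_scope.
Local Open Scope ring_scope.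

Lemma measurable_invR (R : realType) :
  measurable_fun [set: R] (fun x : R => x^-1).
Proof.
have -> : [set: R] = [set 0] `|` ~` [set 0] by rewrite setUCr.
have mC : measurable (~` [set (0:R)]) by apply: measurableC.
apply/measurable_funU => //; split.
- move=> _ B mB; have [B0|B0] := pselect (B (0:R)^-1).
    have -> : [set (0:R)] `&` (fun x : R => x^-1) @^-1` B = [set 0].
      by apply/seteqP; split => [x []//|x /= ->]; split.
    by [].
  have -> : [set (0:R)] `&` (fun x : R => x^-1) @^-1` B = set0.
    by apply/seteqP; split => [x [/= -> //]|x].
  by [].
- apply: open_continuous_measurable_fun.
    apply: closed_openC; apply: accessible_closed_set1.
    exact: hausdorff_accessible.
  move=> x; rewrite inE /= => /eqP x0; exact: inv_continuous.
Qed.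

Section Gen.
Context {R : realType} {d : measure_display} {T : measurableType d}
  (P : probability T R).

Lemma bnd_integrable (D : set T) (k : T -> R) (C : R) :
  measurable D -> measurable_fun D k -> (forall x, D x -> `|k x| <= C) ->
  P.-integrable D (EFin \o k).
Proof.
move=> mD mk kC.
apply: (@le_integrable _ _ _ P D mD _ (EFin \o cst C)) => //.
- exact/measurable_EFinP.
- move=> x Dx /=; rewrite lee_fin (le_trans (kC x Dx))//.
  exact: ler_norm.
- exact: finite_measure_integrable_cst.
Qed.

Lemma mulbnd_integrable (D : set T) (G k : T -> R) (C : R) :
  measurable D -> P.-integrable D (EFin \o G) ->
  measurable_fun D k -> (forall x, D x -> `|k x| <= C) ->
  P.-integrable D (fun x => (G x * k x)%:E).
Proof.
move=> mD iG mk kC.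
have := @integrableMl _ _ _ P D mD (EFin \o G) k iG mk.
have bk : [bounded k x | x in D].
  exists C; split; first exact: num_real.
  move=> M CM x Dx /=; exact: le_trans (kC x Dx) (ltW CM).
move=> /(_ bk); apply: eq_integrable => // x _ /=.
Qed.


Lemma mpre {dV} {V : measurableType dV} (Z : T -> V) (S : set V) :
  measurable_fun setT Z -> measurable S -> measurable (Z @^-1` S).
Proof. by move=> mZ mS; rewrite -[_ @^-1` _]setTI; exact: mZ. Qed.

Lemma mT {dV} {V : measurableType dV} (E : set T) (f : T -> V) :
  measurable_fun setT f -> measurable_fun E f.
Proof. by move=> mf; exact: (measurable_funS measurableT (@subsetT _ E) mf). Qed.

Lemma ind_int {dV} {V : measurableType dV} (E : set T) (Z : T -> V)
  (G : T -> R) (S : set V) :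
  (\int[P]_(x in E) (G x * \1_S (Z x))%:E =
   \int[P]_(x in E `&` Z @^-1` S) (G x)%:E)%E.
Proof.
rewrite integral_mkcondr; apply: eq_integral => x _.
rewrite patchE indicE.
have -> : (Z x \in S) = (x \in Z @^-1` S) by [].

by case: ifPn => _ /=; rewrite ?mulr1 ?mulr0.
Qed.

Lemma simple_int {dV} {V : measurableType dV} (E : set T) (Z : T -> V)
  (G : T -> R) (s : {nnsfun V >-> R}) :
  measurable E -> measurable_fun setT Z -> P.-integrable E (EFin \o G) ->
  let L := finmap.enum_fset (fset_set (range s)) in
  (\int[P]_(x in E) (G x * s (Z x))%:E =
   \sum_(i < size L) (L`_i)%:E * \int[P]_(x in E `&` Z @^-1` (s @^-1` [set L`_i])) (G x)%:E)%E.
Proof.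
move=> mE mZ iG L.
under eq_integral do rewrite (fimfunEord s (Z _)) mulr_sumr -sumEFin.
rewrite integral_sum//; last first.
  move=> i; apply: (@mulbnd_integrable _ _ _ (`|L`_i|)) => //.
  - apply: measurable_funM; first exact: measurable_cst.
    apply: mT.
    apply: measurableT_comp => //; apply: measurable_indic.
  - move=> x _; rewrite /L normrM indicE.
    by case: (_ \in _) => /=; rewrite ?normr1 ?normr0 ?mulr1 ?mulr0.
apply: eq_bigr => i _.
under eq_integral do rewrite mulrCA EFinM.
rewrite integralZl//; last first.
  apply: (@mulbnd_integrable _ _ _ (1)) => //.
  - apply: mT.
    apply: measurableT_comp => //; apply: measurable_indic.
  - move=> x _; rewrite indicE.
    by case: (_ \in _) => /=; rewrite ?normr1 ?normr0.
by rewrite ind_int.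
Qed.

Lemma cev_simple {dV} {V : measurableType dV} (E : set T) (X : T -> R)
  (Z : T -> V) (h : V -> R) (s : {nnsfun V >-> R}) :
  measurable E -> measurable_fun setT Z -> P.-integrable E (EFin \o X) ->
  cond_exp_version P E X Z h ->
  (\int[P]_(x in E) (X x * s (Z x))%:E =
   \int[P]_(x in E) (h (Z x) * s (Z x))%:E)%E.
Proof.
move=> mE mZ iX [mh [ih hE]].
have ihE : P.-integrable E (EFin \o (h \o Z)).
  exact: integrableS ih.
rewrite (@simple_int _ _ _ _ _ s mE mZ iX) (@simple_int _ _ _ _ _ s mE mZ ihE).
apply: eq_bigr => i _; congr (_ * _)%E.
apply: hE; exact: measurable_funPTI.
Qed.


Lemma cev_nonneg {dV} {V : measurableType dV} (E : set T) (X : T -> R)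
  (Z : T -> V) (h : V -> R) (f : V -> R) (C : R) :
  measurable E -> measurable_fun setT Z -> P.-integrable E (EFin \o X) ->
  cond_exp_version P E X Z h ->
  measurable_fun setT f -> (forall v, 0 <= f v <= C) ->
  (\int[P]_(x in E) (X x * f (Z x))%:E =
   \int[P]_(x in E) (h (Z x) * f (Z x))%:E)%E.
Proof.
move=> mE mZ iX hcev mf fC.
have mf' : measurable_fun setT (EFin \o f) by exact/measurable_EFinP.
pose s := nnsfun_approx measurableT mf'.
have sle n v : s n v <= f v.
  rewrite -lee_fin /s nnsfun_approxE; apply: le_approx => //.
  by move=> y _ /=; rewrite lee_fin; case/andP: (fC y).
have cvs v : (EFin \o (fun n => s n v)) @ \oo --> (f v)%:E.
  apply: (@cvg_nnsfun_approx _ _ _ _ measurableT _ mf') => //.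
  by move=> y _ /=; rewrite lee_fin; case/andP: (fC y).
have key G : P.-integrable E (EFin \o G) ->
    (fun n => \int[P]_(x in E) (G x * s n (Z x))%:E)%E @ \oo -->
    (\int[P]_(x in E) (G x * f (Z x))%:E)%E.
  move=> iG.
  have mG : measurable_fun E G.
    by apply/measurable_EFinP; exact: (measurable_int P iG).
  apply: (@dominated_cvg _ _ _ P E mE _ _ (fun x => (`|G x| * C)%:E)).
  - move=> n; apply/measurable_EFinP; apply: measurable_funM => //.
    apply: mT; apply: measurableT_comp => //.
  - move=> x Ex.
    have -> : (fun n => (G x * s n (Z x))%:E) =
        (fun n => (G x)%:E * (EFin \o (fun n => s n (Z x))) n)%E.
      by apply/funext => n /=; rewrite EFinM.
    rewrite EFinM; exact: cvgeZl.
  - by [].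
  - have iaG : P.-integrable E (EFin \o (fun x => `|G x|)).
      apply: eq_integrable (integrable_abse iG) => //.
    have := @mulbnd_integrable E (fun x => `|G x|) (cst C) `|C| mE iaG.
    apply => //; exact: measurable_cst.
  - move=> n x Ex; rewrite abse_EFin lee_fin normrM ler_wpM2l//.
    have s0 : 0 <= s n (Z x) by [].
    rewrite ger0_norm//; apply: le_trans (sle n (Z x)) _.
    by case/andP: (fC (Z x)).
have [mh [ih hE]] := hcev.
have ihE : P.-integrable E (EFin \o (h \o Z)) by exact: integrableS ih.
have k1 := key X iX; have k2 := key (h \o Z) ihE.
have eqseq : (fun n => \int[P]_(x in E) (X x * s n (Z x))%:E)%E =
             (fun n => \int[P]_(x in E) (h (Z x) * s n (Z x))%:E)%E.
  by apply/funext => n; exact: cev_simple.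
rewrite eqseq in k1.
exact: (cvg_unique _ k1 k2).
Qed.


Lemma cev_bnd {dV} {V : measurableType dV} (E : set T) (X : T -> R)
  (Z : T -> V) (h : V -> R) (f : V -> R) (C : R) :
  measurable E -> measurable_fun setT Z -> P.-integrable E (EFin \o X) ->
  cond_exp_version P E X Z h ->
  measurable_fun setT f -> (forall v, `|f v| <= C) ->
  (\int[P]_(x in E) (X x * f (Z x))%:E =
   \int[P]_(x in E) (h (Z x) * f (Z x))%:E)%E.
Proof.
move=> mE mZ iX hcev mf fC.
have [mh [ih hE]] := hcev.
have ihE : P.-integrable E (EFin \o (h \o Z)) by exact: integrableS ih.
have mfZ : measurable_fun E (f \o Z) by apply: mT; exact: measurableT_comp.
have fZC : forall x, E x -> `|(f \o Z) x| <= C by move=> x _; exact: fC.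
have mcZ : measurable_fun E (fun x : T => `|C|) by exact: measurable_cst.
have cZC : forall x, E x -> `|(fun _ : T => `|C|) x| <= `|C| by move=> x _; rewrite normr_id.
have mf1 : measurable_fun setT (fun v => f v + `|C|).
  apply: measurable_funD => //; exact: measurable_cst.
have bf1 : forall v, 0 <= f v + `|C| <= `|C| + `|C|.
  move=> v; have := le_trans (fC v) (ler_norm C).
  rewrite ler_norml => /andP[h1 h2]; apply/andP; split.
    by rewrite -lerBlDr sub0r.
  by rewrite lerD2r.
have H1 := @cev_nonneg _ _ E X Z h (fun v => f v + `|C|) (`|C| + `|C|) mE mZ iX hcev mf1 bf1.
have H2 := @cev_nonneg _ _ E X Z h (fun v => `|C|) `|C| mE mZ iX hcev
  (measurable_cst _) (fun v => introT andP (conj (normr_ge0 C) (lexx _))).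
move: H1.
under eq_integral do rewrite mulrDr EFinD.
under [X in _ = X -> _]eq_integral do rewrite mulrDr EFinD.
rewrite integralD//; first last.
- exact: (@mulbnd_integrable _ _ _ `|C|).
- exact: (@mulbnd_integrable _ _ _ C).
rewrite integralD//; first last.
- exact: (@mulbnd_integrable _ _ _ `|C|).
- exact: (@mulbnd_integrable _ _ _ C).
rewrite H2.
have fin : (\int[P]_(x in E) (h (Z x) * `|C|)%:E)%E \is a fin_num.
  apply: integrable_fin_num => //; exact: (@mulbnd_integrable _ _ _ `|C|).
move=> e; rewrite -[LHS](addeK _ fin) e addeK//.
Qed.


Lemma pos_int0 (D : set T) (F : T -> R) :
  measurable D -> measurable_fun D F ->
  {ae P, forall x, D x -> 0 < F x} ->
  (\int[P]_(x in D) (F x)%:E = 0)%E -> P D = 0%E.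
Proof.
move=> mD mF Fpos i0.
have mEF : measurable_fun D (EFin \o F) by exact/measurable_EFinP.
have e : (\int[P]_(x in D) `|(EFin \o F) x| = \int[P]_(x in D) (EFin \o F) x)%E.
  apply: ae_eq_integral => //.
  - exact: measurableT_comp.
  - apply: filterS Fpos => x H Dx /=; rewrite gtr0_norm//; exact: H.
have := (ae_eq_integral_abs P mD mEF).1; rewrite e => /(_ i0) H0.
have : {ae P, forall x, ~ D x}.
  apply: filterS2 Fpos H0 => x H1 H2 Dx.
  have := H2 Dx; have := H1 Dx => /[swap] /= [[]] ->; rewrite ltxx.
  by [].
move=> [N [mN PN sub]].
apply/eqP; rewrite eq_le measure_ge0 andbT -PN; apply: le_measure => //.
- by rewrite inE.
- by rewrite inE.
- by move=> x Dx; apply: sub => /=; apply.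
Qed.

Lemma ae_of_null (S : set T) : measurable S -> P S = 0%E ->
  {ae P, forall x, ~ S x}.
Proof.
move=> mS PS; exists S; split => // x /=.
by move/contrapT.
Qed.


Lemma cev_ub {dV} {V : measurableType dV} (E : set T) (X : T -> R)
  (Z : T -> V) (h : V -> R) (b : R) :
  measurable E -> measurable_fun setT Z -> P.-integrable E (EFin \o X) ->
  cond_exp_version P E X Z h -> (forall x, E x -> X x <= b) ->
  (forall S, measurable S -> P (E `&` Z @^-1` S) = 0%E -> P (Z @^-1` S) = 0%E) ->
  {ae P, forall x, h (Z x) <= b}.
Proof.
move=> mE mZ iX [mh [ih hE]] Xb Epos.
have mX : measurable_fun E X.
  by apply/measurable_EFinP; exact: (measurable_int P iX).
pose S := h @^-1` `]b, +oo[%classic.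
have mS : measurable S by rewrite /S -[_ @^-1` _]setTI; exact: mh.
have mD : measurable (E `&` Z @^-1` S) by apply: measurableI => //; exact: mpre.
have PD : P (E `&` Z @^-1` S) = 0%E.
  apply: (@pos_int0 _ (fun x => h (Z x) - X x)) => //.
  - apply: measurable_funB.
      by apply: mT; exact: measurableT_comp.
    exact: measurable_funS mX.
  - apply: nearW => x [Ex /=]; rewrite /S /= in_itv /= andbT => hb.
    by rewrite subr_gt0 (le_lt_trans (Xb x Ex)).
  - rewrite integralB_EFin//.
    + by rewrite (hE S mS) subee// integrable_fin_num//; exact: integrableS ih.
    + first [exact: (integrableS measurableT mD (subsetT _) ih) |
             exact: (integrableS mE mD (@subIsetl _ _ _) iX)].
    + first [exact: (integrableS measurableT mD (subsetT _) ih) |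
             exact: (integrableS mE mD (@subIsetl _ _ _) iX)].
have := ae_of_null _ (mpre _ _ mZ mS) (Epos S mS PD).
apply: filterS => x /= nS; rewrite leNgt; apply/negP => bh; apply: nS.
by rewrite /S /= in_itv /= andbT.
Qed.

Lemma cev_lb {dV} {V : measurableType dV} (E : set T) (X : T -> R)
  (Z : T -> V) (h : V -> R) (a : R) :
  measurable E -> measurable_fun setT Z -> P.-integrable E (EFin \o X) ->
  cond_exp_version P E X Z h -> (forall x, E x -> a <= X x) ->
  (forall S, measurable S -> P (E `&` Z @^-1` S) = 0%E -> P (Z @^-1` S) = 0%E) ->
  {ae P, forall x, a <= h (Z x)}.
Proof.
move=> mE mZ iX [mh [ih hE]] Xa Epos.
have iX' : P.-integrable E (EFin \o (fun x => - X x)).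
  by apply: eq_integrable (integrableN iX) => // x _.
have ih' : P.-integrable setT (fun x => (- h (Z x))%:E).
  by apply: eq_integrable (integrableN ih) => // x _.
have hcev : cond_exp_version P E (fun x => - X x) Z (fun v => - h v).
  split; first exact: measurable_funN.
  split => // B mB.
  have mB' : measurable (E `&` Z @^-1` B) by apply: measurableI => //; exact: mpre.
  rewrite (eq_integral (fun x => - (X x)%:E)%E)// integralN; last first.
    by apply: integrable_add_def => //; exact: (integrableS mE mB' (@subIsetl _ _ _) iX).
  rewrite [RHS](eq_integral (fun x => - (h (Z x))%:E)%E)// integralN; last first.
    by apply: integrable_add_def => //; exact: (integrableS measurableT mB' (subsetT _) ih).
  by rewrite hE.
have := @cev_ub _ _ E _ Z _ (- a) mE mZ iX' hcev _ Epos.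
have H : forall x, E x -> - X x <= - a by move=> x Ex; rewrite lerN2; exact: Xa.
move=> /(_ H).
by apply: filterS => x; rewrite lerN2.
Qed.

End Gen.

Ltac mfun :=
  repeat first
    [ assumption
    | apply: measurable_cst
    | apply: measurable_funM
    | apply: measurable_funD
    | apply: measurable_funB
    | apply: measurable_maxr
    | apply: measurable_minr
    | apply: mT ].

Section Main.
Variables (R : realType) (d : measure_display) (T : measurableType d)
  (P : probability T R) (dW : measure_display) (Wsp : measurableType dW)
  (W : T -> Wsp) (A Y : T -> R).
Hypotheses (mW : measurable_fun setT W) (mA : measurable_fun setT A)
  (mY : measurable_fun setT Y)
  (A01 : forall x, A x = 0 \/ A x = 1)
  (Y01 : forall x, 0 <= Y x <= 1).
Variables (g m : Wsp -> R).
Hypotheses (hg : cond_exp_version P setT A W g)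
  (hm : cond_exp_version P [set x | A x = 1] Y W m).
Variables (eps : R).
Hypotheses (eps_gt0 : 0 < eps)
  (positivity : {ae P, forall x, eps < g (W x)}).
Variables (g1 m1 : Wsp -> R) (eps1 : R).
Hypotheses (eps1_gt0 : 0 < eps1)
  (mg1 : measurable_fun setT g1) (mm1 : measurable_fun setT m1)
  (g1_range : forall w, eps1 <= g1 w <= 1)
  (m1_range : forall w, 0 <= m1 w <= 1).
Variables (rho : R -> R).
Hypothesis (hrho : cond_exp_version P [set x | A x = 1]
            (fun x => Y x - m1 (W x)) (fun x => g1 (W x)) rho).
Variables (eta : R -> R).
Hypothesis (heta : cond_exp_version P setT
            (fun x => g1 (W x)) (fun x => rho (g1 (W x))) eta).

Local Notation EA := [set x | A x = 1].

Lemma mEA : measurable EA.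
Proof. by have := mA measurableT _ (measurable_set1 (1:R)); rewrite setTI. Qed.

Lemma A_ind x : A x = \1_EA x.
Proof.
rewrite indicE; case: (A01 x) => Ax.
- by rewrite Ax memNset //= Ax => /eqP; rewrite eq_sym oner_eq0.
- by rewrite Ax mem_set.
Qed.

Lemma mg : measurable_fun setT g. Proof. by case: hg. Qed.
Lemma mm : measurable_fun setT m. Proof. by case: hm. Qed.
Lemma mrho : measurable_fun setT rho. Proof. by case: hrho. Qed.
Lemma meta : measurable_fun setT eta. Proof. by case: heta. Qed.

Lemma mgW : measurable_fun setT (fun x => g (W x)).
Proof. exact: measurableT_comp mg mW. Qed.
Lemma mmW : measurable_fun setT (fun x => m (W x)).
Proof. exact: measurableT_comp mm mW. Qed.
Lemma mg1W : measurable_fun setT (fun x => g1 (W x)).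
Proof. exact: measurableT_comp mg1 mW. Qed.
Lemma mm1W : measurable_fun setT (fun x => m1 (W x)).
Proof. exact: measurableT_comp mm1 mW. Qed.
Lemma mRx : measurable_fun setT (fun x => rho (g1 (W x))).
Proof. exact: measurableT_comp mrho mg1W. Qed.
Lemma metaR : measurable_fun setT (fun x => eta (rho (g1 (W x)))).
Proof. exact: measurableT_comp meta mRx. Qed.

Lemma iA : P.-integrable setT (EFin \o A).
Proof.
apply: (@bnd_integrable _ _ _ P _ _ 1) => // x _.
by case: (A01 x) => ->; rewrite ?normr0 ?normr1.
Qed.

Lemma iYEA : P.-integrable EA (EFin \o Y).
Proof.
apply: (@bnd_integrable _ _ _ P _ _ 1); first exact: mEA.
  exact: mT.
by move=> x _; case/andP: (Y01 x) => h0 h1; rewrite ger0_norm.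
Qed.

Lemma imW : P.-integrable setT (fun x => (m (W x))%:E).
Proof. by case: hm => _ []. Qed.

Lemma PosW (S : set Wsp) : measurable S ->
  P (EA `&` W @^-1` S) = 0%E -> P (W @^-1` S) = 0%E.
Proof.
move=> mS P0.
have mWS : measurable (W @^-1` S) by exact: mpre.
case: hg => _ [_ hgE]; have := hgE S mS; rewrite setTI.
under eq_integral do rewrite A_ind.
rewrite integral_indic//; last exact: mEA.
move=> e.
have e2 : (\int[P]_(x in W @^-1` S) (g (W x))%:E = 0)%E by rewrite -e; exact: P0.
apply: (@pos_int0 _ _ _ P _ (fun x => g (W x))) => //.
- exact: mT mgW.
- apply: filterS positivity => x h _; exact: lt_trans h.
Qed.


Lemma PosG (S : set R) : measurable S ->
  P (EA `&` (fun x => g1 (W x)) @^-1` S) = 0%E ->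
  P ((fun x => g1 (W x)) @^-1` S) = 0%E.
Proof.
move=> mS; apply: (PosW (g1 @^-1` S)).
by rewrite -[_ @^-1` _]setTI; exact: mg1 measurableT _ mS.
Qed.

Lemma AEm : {ae P, forall x, 0 <= m (W x) <= 1}.
Proof.
have h1 := cev_ub P EA Y W m 1 mEA mW iYEA hm
  (fun x _ => proj2 (andP (Y01 x))) PosW.
have h0 := cev_lb P EA Y W m 0 mEA mW iYEA hm
  (fun x _ => proj1 (andP (Y01 x))) PosW.
by apply: filterS2 h0 h1 => x -> ->.
Qed.

Lemma iYm1 : P.-integrable EA (EFin \o (fun x => Y x - m1 (W x))).
Proof.
apply: (@bnd_integrable _ _ _ P _ _ 1); first exact: mEA.
  apply: mT; apply: measurable_funB => //; exact: mm1W.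
move=> x _; case/andP: (Y01 x) => y0 y1; case/andP: (m1_range (W x)) => n0 n1.
rewrite ler_norml; apply/andP; split.
  by rewrite lerBrDr -addrC -lerBrDr opprK (le_trans n1)// lerDr.
by rewrite lerBlDr (le_trans y1)// lerDl.
Qed.

Lemma AErho : {ae P, forall x, -1 <= rho (g1 (W x)) <= 1}.
Proof.
have hb x : [set x | A x = 1] x -> -1 <= Y x - m1 (W x) <= 1.
  move=> _; case/andP: (Y01 x) => y0 y1; case/andP: (m1_range (W x)) => n0 n1.
  rewrite -ler_norml ler_norml; apply/andP; split.
    by rewrite lerBrDr -addrC -lerBrDr opprK (le_trans n1)// lerDr.
  by rewrite lerBlDr (le_trans y1)// lerDl.
have h1 := cev_ub P EA _ _ rho 1 mEA mg1W iYm1 hrho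
  (fun x Ex => proj2 (andP (hb x Ex))) PosG.
have h0 := cev_lb P EA _ _ rho (-1) mEA mg1W iYm1 hrho
  (fun x Ex => proj1 (andP (hb x Ex))) PosG.
by apply: filterS2 h0 h1 => x -> ->.
Qed.

Lemma AEeta : {ae P, forall x, eps1 <= eta (rho (g1 (W x)))}.
Proof.
have ig1 : P.-integrable setT (EFin \o (fun x => g1 (W x))).
  apply: (@bnd_integrable _ _ _ P _ _ 1) => //; first exact: mg1W.
  move=> x _; case/andP: (g1_range (W x)) => a b.
  by rewrite ger0_norm// (le_trans _ a)// ltW.
apply: (cev_lb P setT _ _ eta eps1 measurableT mRx ig1 heta).
  by move=> x _; case/andP: (g1_range (W x)).
by move=> S mS; rewrite setTI.
Qed.


Definition cl (t : R) : R := Num.max (-1) (Num.min t 1).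
Definition cl01 (t : R) : R := Num.max 0 (Num.min t 1).
Definition ebar (t : R) : R := Num.max (eta t) eps1.
Definition phi (t : R) : R := (ebar (rho t))^-1.
Definition chi (t : R) : R := cl t * (ebar t)^-1.
Definition zeta (t : R) : R := (Num.max t eps1)^-1.

Lemma mid : measurable_fun [set: R] (fun t : R => t).
Proof. exact: measurable_id. Qed.

Lemma mcl : measurable_fun setT cl.
Proof.
apply: measurable_maxr; first exact: measurable_cst.
apply: measurable_minr; [exact: measurable_id | exact: measurable_cst].
Qed.
Lemma mcl01 : measurable_fun setT cl01.
Proof.
apply: measurable_maxr; first exact: measurable_cst.
apply: measurable_minr; [exact: measurable_id | exact: measurable_cst].
Qed.
Lemma mebar : measurable_fun setT ebar.
Proof. apply: measurable_maxr; [exact: meta | exact: measurable_cst]. Qed.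
Lemma mphi : measurable_fun setT phi.
Proof.
apply: (measurableT_comp (f := fun t : R => t^-1)); first exact: measurable_invR.
exact: measurableT_comp mebar mrho.
Qed.
Lemma mchi : measurable_fun setT chi.
Proof.
apply: measurable_funM; first exact: mcl.
apply: (measurableT_comp (f := fun t : R => t^-1)); first exact: measurable_invR.
exact: mebar.
Qed.
Lemma mzeta : measurable_fun setT zeta.
Proof.
apply: (measurableT_comp (f := fun t : R => t^-1)); first exact: measurable_invR.
apply: measurable_maxr; [exact: measurable_id | exact: measurable_cst].
Qed.

Lemma inv_bnd (t : R) : eps1 <= t -> `|t^-1| <= eps1^-1.
Proof.
move=> et; have t0 : 0 < t by exact: lt_le_trans et.
rewrite ger0_norm; last by rewrite invr_ge0 ltW.
by rewrite lef_pV2 ?posrE.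
Qed.

Lemma ebar_ge t : eps1 <= ebar t. Proof. by rewrite /ebar le_max lexx orbT. Qed.

Lemma phi_bnd t : `|phi t| <= eps1^-1.
Proof. exact: inv_bnd (ebar_ge _). Qed.

Lemma zeta_bnd t : `|zeta t| <= eps1^-1.
Proof. by apply: inv_bnd; rewrite le_max lexx orbT. Qed.

Lemma cl_bnd t : `|cl t| <= 1.
Proof.
rewrite ler_norml; apply/andP; split; first by rewrite /cl le_max lexx.
rewrite /cl ge_max ge_min lexx orbT andbT; lra.
Qed.

Lemma cl_id t : -1 <= t <= 1 -> cl t = t.
Proof.
case/andP => a b; rewrite /cl (min_idPl b) (max_idPr a) //.
Qed.

Lemma cl01_id t : 0 <= t <= 1 -> cl01 t = t.
Proof.
case/andP => a b; rewrite /cl01 (min_idPl b) (max_idPr a) //.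
Qed.

Lemma cl01_bnd t : 0 <= cl01 t <= 1.
Proof.
rewrite /cl01 le_max lexx /= ge_max ler01 /= ge_min lexx orbT //.
Qed.

Lemma chi_bnd t : `|chi t| <= eps1^-1.
Proof.
rewrite /chi normrM -[X in _ <= X]mul1r ler_pM ?normr_ge0//.
  exact: cl_bnd.
exact: inv_bnd (ebar_ge _).
Qed.


Lemma JA (G : T -> R) :
  (\int[P]_x (A x * G x)%:E = \int[P]_(x in EA) (G x)%:E)%E.
Proof.
have := @ind_int _ _ _ P _ _ setT (fun x => x) G EA.
rewrite setTI => <-; apply: eq_integral => x _.
by rewrite A_ind mulrC.
Qed.

Lemma F1 (Hg : {ae P, forall x, g1 (W x) = g (W x)}) (f : Wsp -> R) (C : R) :
  measurable_fun setT f -> (forall w, `|f w| <= C) ->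
  (\int[P]_(x in EA) (f (W x))%:E = \int[P]_x (g1 (W x) * f (W x))%:E)%E.
Proof.
move=> mf fC.
rewrite -JA (cev_bnd P setT A W g f C measurableT mW iA hg mf fC).
have mfW : measurable_fun setT (fun x => f (W x)) by exact: measurableT_comp.
apply: ae_eq_integral => //.
- apply/measurable_EFinP; apply: measurable_funM => //; exact: mgW.
- apply/measurable_EFinP; apply: measurable_funM => //; exact: mg1W.
- by apply: filterS Hg => x e _; rewrite e.
Qed.

Lemma F2 (k : R -> R) (C : R) :
  measurable_fun setT k -> (forall t, `|k t| <= C) ->
  (\int[P]_(x in EA) ((Y x - m1 (W x)) * k (g1 (W x)))%:E =
   \int[P]_(x in EA) (rho (g1 (W x)) * k (g1 (W x)))%:E)%E.
Proof.
move=> mk kC.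
exact: (cev_bnd P EA _ _ rho k C mEA mg1W iYm1 hrho mk kC).
Qed.

Lemma ig1 : P.-integrable setT (EFin \o (fun x => g1 (W x))).
Proof.
apply: (@bnd_integrable _ _ _ P _ _ 1) => //; first exact: mg1W.
move=> x _; case/andP: (g1_range (W x)) => a b.
by rewrite ger0_norm// (le_trans _ a)// ltW.
Qed.

Lemma F3 (k : R -> R) (C : R) :
  measurable_fun setT k -> (forall t, `|k t| <= C) ->
  (\int[P]_x (g1 (W x) * k (rho (g1 (W x))))%:E =
   \int[P]_x (eta (rho (g1 (W x))) * k (rho (g1 (W x))))%:E)%E.
Proof.
move=> mk kC.
exact: (cev_bnd P setT _ _ eta k C measurableT mRx ig1 heta mk kC).
Qed.


Lemma mphiW : measurable_fun setT (fun x => phi (g1 (W x))).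
Proof. exact: measurableT_comp mphi mg1W. Qed.
Lemma mclR : measurable_fun setT (fun x => cl (rho (g1 (W x)))).
Proof. exact: measurableT_comp mcl mRx. Qed.
Lemma mzetaW : measurable_fun setT (fun x => zeta (g1 (W x))).
Proof. exact: measurableT_comp mzeta mg1W. Qed.
Lemma mYm1 : measurable_fun setT (fun x => Y x - m1 (W x)).
Proof. apply: measurable_funB => //; exact: mm1W. Qed.

Lemma J_EA :
  (\int[P]_x (A x * phi (g1 (W x)) * (Y x - m1 (W x)))%:E =
   \int[P]_(x in EA) ((Y x - m1 (W x)) * phi (g1 (W x)))%:E)%E.
Proof. by rewrite -JA; apply: eq_integral => x _; congr (_%:E); ring. Qed.

Lemma J_R (Hg : {ae P, forall x, g1 (W x) = g (W x)}) :
  (\int[P]_x (A x * phi (g1 (W x)) * (Y x - m1 (W x)))%:E =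
   \int[P]_x (rho (g1 (W x)))%:E)%E.
Proof.
rewrite J_EA (@F2 _ _ mphi phi_bnd).
transitivity (\int[P]_(x in EA) (cl (rho (g1 (W x))) * phi (g1 (W x)))%:E)%E.
  apply: ae_eq_integral; first exact: mEA.
  - apply/measurable_EFinP; apply: measurable_funM; apply: mT; [exact: mRx|exact: mphiW].
  - apply/measurable_EFinP; apply: measurable_funM; apply: mT; [exact: mclR|exact: mphiW].
  - by apply: filterS AErho => x h _; rewrite cl_id.
rewrite (F1 Hg (fun w => cl (rho (g1 w)) * phi (g1 w)) (eps1^-1)); first last.
- move=> w; rewrite normrM -[X in _ <= X]mul1r ler_pM ?normr_ge0//.
  + exact: cl_bnd.
  + exact: phi_bnd.
- apply: measurable_funM.
  + exact: measurableT_comp mcl (measurableT_comp mrho mg1).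
  + exact: measurableT_comp mphi mg1.
transitivity (\int[P]_x (g1 (W x) * chi (rho (g1 (W x))))%:E)%E.
  by apply: eq_integral => x _.
rewrite (@F3 _ _ mchi chi_bnd).
apply: ae_eq_integral => //.
- apply/measurable_EFinP; apply: measurable_funM; [exact: metaR|].
  exact: measurableT_comp mchi mRx.
- apply/measurable_EFinP; exact: mRx.
- apply: filterS2 AEeta AErho => x he hr _.
  have e0 : eta (rho (g1 (W x))) != 0 by rewrite gt_eqF// (lt_le_trans eps1_gt0).
  by rewrite /chi /ebar (max_idPl he) cl_id// mulrCA divff// mulr1.
Qed.


Lemma imEA : P.-integrable EA (EFin \o (fun x => m (W x))).
Proof. apply: integrableS imW => //; exact: mEA. Qed.

Lemma split_EA (Hf : T -> R) (f : Wsp -> R) (C : R) :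
  P.-integrable EA (EFin \o Hf) ->
  measurable_fun setT f -> (forall w, `|f w| <= C) ->
  (\int[P]_(x in EA) ((Hf x - m1 (W x)) * f (W x))%:E =
   \int[P]_(x in EA) (Hf x * f (W x))%:E -
   \int[P]_(x in EA) (m1 (W x) * f (W x))%:E)%E.
Proof.
move=> iH mf fC.
have mfW : measurable_fun EA (fun x => f (W x)) by apply: mT; exact: measurableT_comp.
rewrite -integralB_EFin; first last.
- apply: (@mulbnd_integrable _ _ _ P _ _ _ C) => //; first exact: mEA.
  apply: (@bnd_integrable _ _ _ P _ _ 1); first exact: mEA.
    by apply: mT; exact: mm1W.
  by move=> x _; case/andP: (m1_range (W x)) => a b; rewrite ger0_norm.
- apply: (@mulbnd_integrable _ _ _ P _ _ _ C) => //; exact: mEA.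
- exact: mEA.
by apply: eq_integral => x _; rewrite mulrBl.
Qed.

Lemma M_R (Hg : {ae P, forall x, g1 (W x) = g (W x)}) :
  (\int[P]_x (m (W x) - m1 (W x))%:E = \int[P]_x (rho (g1 (W x)))%:E)%E.
Proof.
have g1e x : Num.max (g1 (W x)) eps1 = g1 (W x).
  by apply/max_idPl; case/andP: (g1_range (W x)).
have g10 x : g1 (W x) != 0.
  by rewrite gt_eqF// (lt_le_trans eps1_gt0)//; case/andP: (g1_range (W x)).
pose F := fun w => (cl01 (m w) - m1 w) * zeta (g1 w).
have mF : measurable_fun setT F.
  apply: measurable_funM; last exact: measurableT_comp mzeta mg1.
  apply: measurable_funB => //; exact: measurableT_comp mcl01 mm.
have FC w : `|F w| <= eps1^-1.
  rewrite normrM -[X in _ <= X]mul1r ler_pM ?normr_ge0 ?zeta_bnd//.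
  case/andP: (cl01_bnd (m w)) => a b; case/andP: (m1_range w) => c e.
  rewrite ler_norml; apply/andP; split; lra.
transitivity (\int[P]_x (g1 (W x) * F (W x))%:E)%E.
  apply: ae_eq_integral => //.
  - apply/measurable_EFinP; apply: measurable_funB; [exact: mmW|exact: mm1W].
  - apply/measurable_EFinP; apply: measurable_funM; first exact: mg1W.
    exact: measurableT_comp mF mW.
  - apply: filterS AEm => x hm0 _.
    by rewrite /F cl01_id// /zeta g1e mulrCA divff// mulr1.
rewrite -(F1 Hg F (eps1^-1) mF FC).
transitivity (\int[P]_(x in EA) ((m (W x) - m1 (W x)) * zeta (g1 (W x)))%:E)%E.
  apply: ae_eq_integral; first exact: mEA.
  - apply/measurable_EFinP; apply: mT; exact: measurableT_comp mF mW.
  - apply/measurable_EFinP; apply: mT; apply: measurable_funM; last exact: mzetaW.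
    apply: measurable_funB; [exact: mmW|exact: mm1W].
  - by apply: filterS AEm => x hm0 _; rewrite /F cl01_id.
have mzg : measurable_fun setT (fun w => zeta (g1 w)) by exact: measurableT_comp mzeta mg1.
transitivity (\int[P]_(x in EA) ((Y x - m1 (W x)) * zeta (g1 (W x)))%:E)%E.
  rewrite (@split_EA (fun x => m (W x)) _ _ imEA mzg (fun w => zeta_bnd (g1 w))).
  rewrite (@split_EA Y _ _ iYEA mzg (fun w => zeta_bnd (g1 w))).
  by rewrite (cev_bnd P EA Y W m _ _ mEA mW iYEA hm mzg (fun w => zeta_bnd (g1 w))).
rewrite (@F2 _ _ mzeta zeta_bnd).
transitivity (\int[P]_(x in EA) (cl (rho (g1 (W x))) * zeta (g1 (W x)))%:E)%E.
  apply: ae_eq_integral; first exact: mEA.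
  - apply/measurable_EFinP; apply: measurable_funM; apply: mT; [exact: mRx|exact: mzetaW].
  - apply/measurable_EFinP; apply: measurable_funM; apply: mT; [exact: mclR|exact: mzetaW].
  - by apply: filterS AErho => x h _; rewrite cl_id.
rewrite (F1 Hg (fun w => cl (rho (g1 w)) * zeta (g1 w)) (eps1^-1)); first last.
- move=> w; rewrite normrM -[X in _ <= X]mul1r ler_pM ?normr_ge0//.
  + exact: cl_bnd.
  + exact: zeta_bnd.
- apply: measurable_funM => //.
  exact: measurableT_comp mcl (measurableT_comp mrho mg1).
apply: ae_eq_integral => //.
- apply/measurable_EFinP; apply: measurable_funM; [exact: mg1W|].
  apply: measurable_funM; [exact: mclR|exact: mzetaW].
- apply/measurable_EFinP; exact: mRx.
- apply: filterS AErho => x hr _.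
  by rewrite cl_id// /zeta g1e mulrCA divff// mulr1.
Qed.


Lemma J_M (Hm : {ae P, forall x, m1 (W x) = m (W x)}) :
  (\int[P]_x (A x * phi (g1 (W x)) * (Y x - m1 (W x)))%:E = 0)%E.
Proof.
have mpg : measurable_fun setT (fun w => phi (g1 w)) by exact: measurableT_comp mphi mg1.
have pgb : forall w, `|phi (g1 w)| <= eps1^-1 by move=> w; exact: phi_bnd.
rewrite J_EA.
transitivity (\int[P]_(x in EA) ((Y x - m (W x)) * phi (g1 (W x)))%:E)%E.
  apply: ae_eq_integral; first exact: mEA.
  - apply/measurable_EFinP; apply: measurable_funM; apply: mT; [exact: mYm1|exact: mphiW].
  - apply/measurable_EFinP; apply: measurable_funM; apply: mT; last exact: mphiW.
    apply: measurable_funB => //; exact: mmW.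
  - by apply: filterS Hm => x h _; rewrite h.
have iY' : P.-integrable EA (fun x => (Y x * phi (g1 (W x)))%:E).
  apply: (@mulbnd_integrable _ _ _ P _ _ _ (eps1^-1)) => //; first exact: mEA.
  - exact: iYEA.
  - by apply: mT; exact: mphiW.
have im' : P.-integrable EA (fun x => (m (W x) * phi (g1 (W x)))%:E).
  apply: (@mulbnd_integrable _ _ _ P _ _ _ (eps1^-1)) => //; first exact: mEA.
  - exact: imEA.
  - by apply: mT; exact: mphiW.
transitivity (\int[P]_(x in EA) ((Y x * phi (g1 (W x)))%:E - (m (W x) * phi (g1 (W x)))%:E))%E.
  by apply: eq_integral => x _; rewrite mulrBl EFinB.
rewrite integralB_EFin//; last exact: mEA.
rewrite (cev_bnd P EA Y W m _ _ mEA mW iYEA hm mpg pgb) subee//.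
apply: integrable_fin_num => //; exact: mEA.
Qed.

Lemma M_M (Hm : {ae P, forall x, m1 (W x) = m (W x)}) :
  (\int[P]_x (m (W x) - m1 (W x))%:E = 0)%E.
Proof.
transitivity (\int[P]_x (cst 0 x))%E; last by rewrite integral0.
apply: ae_eq_integral => //.
- apply/measurable_EFinP; apply: measurable_funB; [exact: mmW|exact: mm1W].
- by apply: filterS Hm => x h _ /=; rewrite h subrr.
Qed.

Lemma final_step
  (H : (\int[P]_x (A x * phi (g1 (W x)) * (Y x - m1 (W x)))%:E =
        \int[P]_x (m (W x) - m1 (W x))%:E)%E) :
  let r1 := fun w => rho (g1 w) in
  let e1 := fun w => eta (r1 w) in
  let theta := fine (\int[P]_x (m (W x))%:E)%E in
  (\int[P]_x (D_lambda e1 m1 theta (W x, A x, Y x))%:E = 0)%E.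
Proof.
move=> r1 e1 theta.
have fm : (\int[P]_x (m (W x))%:E)%E \is a fin_num.
  exact: integrable_fin_num imW.
have im1 : P.-integrable setT (EFin \o (fun x => m1 (W x))).
  apply: (@bnd_integrable _ _ _ P _ _ 1) => //; first exact: mm1W.
  by move=> x _; case/andP: (m1_range (W x)) => a b; rewrite ger0_norm.
have iJ : P.-integrable setT (EFin \o (fun x => A x * phi (g1 (W x)) * (Y x - m1 (W x)))).
  apply: (@bnd_integrable _ _ _ P _ _ (eps1^-1)) => //.
    apply: measurable_funM; last exact: mYm1.
    apply: measurable_funM => //; exact: mphiW.
  move=> x _; rewrite !normrM.
  have hA : `|A x| <= 1 by case: (A01 x) => ->; rewrite ?normr0 ?normr1.
  have hD : `|Y x - m1 (W x)| <= 1.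
    case/andP: (Y01 x) => a b; case/andP: (m1_range (W x)) => c e.
    rewrite ler_norml; apply/andP; split; lra.
  rewrite -[X in _ <= X]mul1r -[X in _ <= X]mulr1.
  rewrite ler_pM ?mulr_ge0 ?normr_ge0// ler_pM ?normr_ge0//.
  exact: phi_bnd.
transitivity (\int[P]_x ((A x * phi (g1 (W x)) * (Y x - m1 (W x)) + m1 (W x))%:E
   - theta%:E))%E.
  apply: ae_eq_integral => //.
  - apply/measurable_EFinP; rewrite /D_lambda /=.
    apply: measurable_funB; last exact: measurable_cst.
    apply: measurable_funD; last exact: mm1W.
    apply: measurable_funM; last exact: mYm1.
    apply: measurable_funM => //.
    rewrite /e1 /r1; exact: (measurableT_comp (measurable_invR R) metaR).
  - apply: emeasurable_funB => //.
    apply/measurable_EFinP; apply: measurable_funD; last exact: mm1W.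
    apply: measurable_funM; last exact: mYm1.
    apply: measurable_funM => //; exact: mphiW.
  - apply: filterS AEeta => x he _.
    by rewrite /D_lambda /= /phi /ebar /e1 /r1 (max_idPl he) EFinB.
have iS : P.-integrable setT
   (EFin \o (fun x : T => A x * phi (g1 (W x)) * (Y x - m1 (W x)) + m1 (W x))).
  have := integrableD measurableT iJ im1.
  by apply: eq_integrable => // x _; rewrite /= EFinD.
rewrite integralB_EFin//; last exact: finite_measure_integrable_cst.
under eq_integral do rewrite EFinD.
rewrite integralD//.
rewrite H integral_cst//.
have -> : (theta%:E * P [set: T] = theta%:E)%E by rewrite probability_setT mule1.
rewrite integralB_EFin//.
have fm1 : (\int[P]_x (m1 (W x))%:E)%E \is a fin_num.
  exact: integrable_fin_num im1.
rewrite /theta fineK// subeK//.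
- by rewrite subee.
- exact: imW.
Qed.

End Main.

Theorem theorem2 (R : realType) (d : measure_display) (T : measurableType d)
  (P : probability T R) (dW : measure_display) (Wsp : measurableType dW)
  (W : T -> Wsp) (A Y : T -> R)
  (mW : measurable_fun setT W) (mA : measurable_fun setT A)
  (mY : measurable_fun setT Y)
  (A01 : forall x, A x = 0 \/ A x = 1)
  (Y01 : forall x, 0 <= Y x <= 1)
  (g m : Wsp -> R)
  (hg : cond_exp_version P setT A W g)
  (hm : cond_exp_version P [set x | A x = 1] Y W m)
  (eps : R) (eps_gt0 : 0 < eps)
  (positivity : {ae P, forall x, eps < g (W x)})
  (g1 m1 : Wsp -> R) (eps1 : R) (eps1_gt0 : 0 < eps1)
  (mg1 : measurable_fun setT g1) (mm1 : measurable_fun setT m1)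
  (g1_range : forall w, eps1 <= g1 w <= 1)
  (m1_range : forall w, 0 <= m1 w <= 1)
  (double_robust : {ae P, forall x, g1 (W x) = g (W x)} \/
                   {ae P, forall x, m1 (W x) = m (W x)})
  (rho : R -> R)
  (hrho : cond_exp_version P [set x | A x = 1]
            (fun x => Y x - m1 (W x)) (fun x => g1 (W x)) rho)
  (eta : R -> R)
  (heta : cond_exp_version P setT
            (fun x => g1 (W x)) (fun x => rho (g1 (W x))) eta) :
  let r1 := fun w => rho (g1 w) in
  let e1 := fun w => eta (r1 w) in
  let theta := fine (\int[P]_x (m (W x))%:E)%E in
  (\int[P]_x (D_lambda e1 m1 theta (W x, A x, Y x))%:E = 0)%E.
Proof.
have F := @final_step _ _ _ _ _ _ _ _ _ mW mA mY A01 Y01 _ hm _ _ _ eps1_gt0 mg1 mm1 g1_range m1_range _ hrho _ heta.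
case: double_robust => [Hg|Hm].
- apply: F.
  rewrite (@J_R _ _ _ _ _ _ _ _ _ mW mA mY A01 Y01 _ hg _ eps_gt0 positivity _ _ _ eps1_gt0 mg1 mm1 g1_range m1_range _ hrho _ heta Hg).
  by rewrite (@M_R _ _ _ _ _ _ _ _ _ mW mA mY A01 Y01 _ _ hg hm _ eps_gt0 positivity _ _ _ eps1_gt0 mg1 mm1 g1_range m1_range _ hrho Hg).
- apply: F.
  rewrite (@J_M _ _ _ _ _ _ _ _ _ mW mA mY A01 Y01 _ hm _ _ _ eps1_gt0 mg1 mm1 _ hrho _ heta Hm).
  by rewrite (@M_M _ _ _ _ _ _ _ _ _ mW _ hm _ mm1 Hm).
Qed.
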